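(* Let $m,d\geq 1$ and let $f:(0,\infty)^m\times\mathbb{R}^d\to\mathbb{R}$, $f=f(t,x)$ with $t=(t^1,\dots,t^m)$, $x=(x^1,\dots,x^d)$, satisfy $f(t,0)=0$, have continuous first-order partial derivatives with respect to each $t^\alpha$ and continuous second-order partial derivatives with respect to the $x^a$. Suppose $f$ is a solution of the forward diffusion-like PDE system $$\frac{\partial f}{\partial t^\alpha}(t,x)-\frac12\,c_\alpha(t)\,\Delta_x f(t,x)=0,\qquad \alpha=1,\dots,m.$$ Then $f$ depends on the point $t=(t^1,\dots,t^m)$ only through the product $v=t^1\cdots t^m$, i.e. there is a function $\varphi$ with $f(t,x)=\varphi(t^1\cdots t^m,x)$; thus $f$ is a function of the volume $v$ of the box $\Omega_{0t}=\prod_{\alpha}[0,t^\alpha]$.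
   Context: Here $c_\alpha(t)=\frac{\partial v}{\partial t^\alpha}=\prod_{\beta\neq\alpha}t^\beta$ where $v=t^1\cdots t^m$, and $\Delta_x f=\sum_{a,b=1}^d\delta^{ab}\frac{\partial^2 f}{\partial x^a\partial x^b}=\sum_{a=1}^d\frac{\partial^2 f}{(\partial x^a)^2}$. *)

(* Defs.v *)
From HB Require Import structures.
From mathcomp Require Import all_boot all_order all_algebra.
From mathcomp Require Import all_classical all_reals all_analysis.
Set Implicit Arguments. Unset Strict Implicit. Unset Printing Implicit Defensive.
Import Order.TTheory GRing.Theory Num.Theory.
Import numFieldNormedType.Exports.
Local Open Scope ring_scope.
Local Open Scope classical_set_scope.

Section Defs.
Variable R : realType.

Definition evec (n : nat) (i : 'I_n) : 'rV[R]_n := delta_mx 0 i.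

Definition posvec (m : nat) (t : 'rV[R]_m) : Prop := forall i, 0 < t 0 i.

Definition dom (m d : nat) : set ('rV[R]_m * 'rV[R]_d) := [set p | posvec p.1].

Definition dt (m d : nat) (f : 'rV[R]_m -> 'rV[R]_d -> R) (al : 'I_m)
  (t : 'rV[R]_m) (x : 'rV[R]_d) : R :=
  'D_(evec al) (fun s => f s x) t.

Definition dx (m d : nat) (f : 'rV[R]_m -> 'rV[R]_d -> R) (a : 'I_d)
  (t : 'rV[R]_m) (x : 'rV[R]_d) : R :=
  'D_(evec a) (fun y => f t y) x.

Definition cfun (m : nat) (al : 'I_m) (t : 'rV[R]_m) : R :=
  \prod_(be < m | be != al) t 0 be.

Definition laplacian (m d : nat) (f : 'rV[R]_m -> 'rV[R]_d -> R)
  (t : 'rV[R]_m) (x : 'rV[R]_d) : R :=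
  \sum_(a < d) dx (dx f a) a t x.

End Defs.

(* Main.v *)
Require Import Defs.
From HB Require Import structures.
From mathcomp Require Import all_boot all_order all_algebra.
From mathcomp Require Import all_classical all_reals all_analysis.
From mathcomp Require Import ring lra.
Import Order.TTheory GRing.Theory Num.Theory.
Import numFieldNormedType.Exports.
Local Open Scope ring_scope.
Local Open Scope classical_set_scope.

Section Aux.
Context {R : realType}.

Lemma mvt_abs (F dF : R -> R) (s h : R) : 0 < s -> 0 < s + h ->
  (forall a : R, 0 < a -> is_derive a (1:R) F (dF a)) ->
  exists c, `|c - s| <= `|h| /\ F (s + h) - F s = dF c * h.
Proof.
move=> s0 sh0 dF0.
have cont : forall u v, 0 < u -> u <= v -> {within `[u, v], continuous F}.
  move=> u v u0 uv; apply: derivable_within_continuous => z.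
  rewrite in_itv /= => /andP[uz _]; have z0 : 0 < z by apply: lt_le_trans uz.
  by have [] := dF0 z z0.
have D : forall u v : R, 0 < u -> forall x : R, x \in `]u, v[%R -> is_derive x (1:R) F (dF x).
  move=> u v u0 x xi; move: xi; rewrite in_itv /= => /andP[+ _] => /(lt_trans u0) /dF0; apply.
have [h0|h0] := leP 0 h.
  have ss : s <= s + h by rewrite lerDl.
  have [c] := MVT_segment ss (D _ _ s0) (cont _ _ s0 ss).
  rewrite in_itv /= => /andP[sc ch] E; exists c; split; last first.
    by rewrite E (addrC s h) addrK.
  by rewrite ger0_norm ?subr_ge0 // ger0_norm // lerBlDl.
have ss : s + h <= s by rewrite gerDl le_eqVlt h0 orbT.
have [c] := MVT_segment ss (D _ _ sh0) (cont _ _ sh0 ss).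
rewrite in_itv /= => /andP[sc ch] E; exists c; split.
  by rewrite ler0_norm ?subr_le0 // ltr0_norm // opprB lerBlDr -lerBlDl opprK.
have -> : F (s + h) - F s = - (F s - F (s + h)) by rewrite opprB.
by rewrite E opprD addrA subrr add0r mulrN opprK.
Qed.

Lemma key (g g1 g2 : R -> R -> R) :
  (forall a b : R, 0 < a -> 0 < b -> is_derive a (1:R) (fun a' => g a' b) (g1 a b)) ->
  (forall a b : R, 0 < a -> 0 < b -> is_derive b (1:R) (fun b' => g a b') (g2 a b)) ->
  (forall a b : R, 0 < a -> 0 < b -> a * g1 a b = b * g2 a b) ->
  (forall a b : R, 0 < a -> 0 < b -> forall e : R, 0 < e -> exists2 d : R, 0 < d &
      forall a' b', `|a' - a| < d -> `|b' - b| < d -> `|g1 a' b' - g1 a b| < e) ->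
  forall P s0 s1 : R, 0 < P -> 0 < s0 -> 0 < s1 -> g s0 (P / s0) = g s1 (P / s1).
Proof.
move=> d1 d2 rel c1 P s0 s1 P0.
pose D s := g s (P / s).
have dD : forall s : R, 0 < s -> is_derive s (1:R) D 0.
  move=> s s0'.
  pose b := P / s.
  have b0 : 0 < b by apply: divr_gt0.
  pose bp h := P / (s + h).
  have idl : (fun h : R => h) @ 0^' --> (0:R).
    exact: (cvg_within_filter _ (@cvg_id _ (nbhs (0:R)))).
  have shl : (fun h : R => (s + h)^-1) @ 0^' --> s^-1.
    apply: cvgV; first by rewrite gt_eqF.
    by rewrite -[X in _ --> X]addr0; apply: cvgD => //; exact: cvg_cst.
  have bpl : (fun h : R => bp h - b) @ 0^' --> (0:R).
    rewrite -[X in _ --> X](subrr b); apply: cvgB; last exact: cvg_cst.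
    exact: (cvgMl_tmp (a:=P) shl).
  pose A h := h^-1 * (g (s + h) (bp h) - g s (bp h)).
  pose k u := u^-1 *: ((g s \o shift b) (u *: 1) - g s b).
  suff H : (fun h : R => h^-1 *: ((D \o shift s) (h *: 1) - D s)) @ 0^' --> (0:R).
    split; [exact: (cvgP _ H) | exact: cvg_lim].
  have nearh : \forall h \near (0:R)^', h != 0 /\ `|h| < s.
    near=> h; split; near: h; [exact: nbhs_dnbhs_neq | exact: dnbhs0_lt].
  have sh_of : forall h : R, `|h| < s -> 0 < s + h.
    by move=> h hs; have := ler_norm (- h); rewrite normrN => ?; lra.
  have un_of : forall h : R, h != 0 -> `|h| < s -> bp h - b != 0.
    move=> h hn hs; have sh := sh_of h hs.
    have bpb : bp h - b = - (P * (s^-1 * (s + h)^-1)) * h.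
      by rewrite /bp /b; field; rewrite !gt_eqF.
    by rewrite bpb mulf_neq0 // oppr_eq0 !mulf_neq0 // ?invr_eq0 gt_eqF.
  have E : {near 0^', (fun h => A h + (- (P * (s^-1 * (s + h)^-1))) * k (bp h - b)) =1
     (fun h : R => h^-1 *: ((D \o shift s) (h *: 1) - D s))}.
    near=> h.
    have hn : h != 0 by near: h; exact: nbhs_dnbhs_neq.
    have hs : `|h| < s by near: h; exact: dnbhs0_lt.
    have sh : 0 < s + h by have := ler_norm (- h); rewrite normrN => ?; lra.
    have bpb : bp h - b = - (P * (s^-1 * (s + h)^-1)) * h.
      by rewrite /bp /b; field; rewrite !gt_eqF.
    have un : bp h - b != 0 by rewrite bpb mulf_neq0 // oppr_eq0 !mulf_neq0 // ?invr_eq0 gt_eqF.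
    rewrite /k /A /D /= -[h%:A]/(h * 1) -[(bp h - b)%:A]/((bp h - b) * 1) !mulr1 subrK (addrC h s).
    rewrite -[(bp h - b)^-1 *: _]/((bp h - b)^-1 * _) -[h^-1 *: _]/(h^-1 * _).
    have -> : - (P * (s^-1 * (s + h)^-1)) = (bp h - b) / h by rewrite bpb mulfK.
    rewrite (mulrA (_ / h)) (mulrAC (bp h - b)) mulfV // mul1r -mulrDr.
    by rewrite addrA subrK.
  apply: cvg_trans (near_eq_cvg E) _.
  have T0 : (0:R) = g1 s b + (- (P * (s^-1 * s^-1))) * g2 s b.
    have := rel s b s0' b0; rewrite /b => R1.
    have -> : g1 s b = P / s * g2 s b / s by rewrite -R1 mulrC mulKf // gt_eqF.
    by field; rewrite gt_eqF.
  apply: (@cvg_trans _ (nbhs (g1 s b + (- (P * (s^-1 * s^-1))) * g2 s b))); last by rewrite -T0.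
  apply: cvgD.
    apply/cvgrPdist_lt => e e0.
    have [d d0 Hd] := c1 s b s0' b0 e e0.
    have /cvgrPdist_lt /(_ d d0) Hb := bpl.
    have Hh : \forall h \near (0:R)^', `|h| < d := dnbhs0_lt d0.
    near=> h.
    have [hn hs] : h != 0 /\ `|h| < s by near: h; exact: nearh.
    have hd : `|h| < d by near: h; exact: Hh.
    have hb : `|0 - (bp h - b)| < d by near: h; exact: Hb.
    have sh := sh_of h hs.
    have bph0 : 0 < bp h by apply: divr_gt0.
    have [c [cs E']] := @mvt_abs (fun a => g a (bp h)) (fun a => g1 a (bp h)) s h s0' sh
      (fun a a0 => d1 a (bp h) a0 bph0).
    rewrite /A E' (mulrC (g1 _ _) h) mulKf // distrC; apply: Hd.
      exact: le_lt_trans cs hd.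
    by move: hb; rewrite sub0r normrN.
  apply: cvgM.
    by apply: cvgN; apply: cvgMl_tmp; apply: cvgMl_tmp; exact: shl.
  have kl : k @ 0^' --> g2 s b.
    by have [dv <-] := d2 s b s0' b0; exact: dv.
  apply: cvg_comp kl.
  move=> Q HQ; have H1 := bpl _ HQ.
  suff : \forall h \near (0:R)^', Q (bp h - b) by []. near=> h.
  have [H4 H5] : h != 0 /\ `|h| < s by near: h; exact: nearh.
  have H3 : bp h - b != 0 -> Q (bp h - b) by near: h; exact: H1.
  by apply: H3; exact: un_of.
move=> p0 p1; rewrite -/(D s0) -/(D s1).
wlog le : s0 s1 p0 p1 / s0 <= s1.
  move=> W; case: (leP s0 s1) => h; first exact: W.
  by symmetry; apply: W => //; rewrite le_eqVlt h orbT.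
have cont : {within `[s0, s1], continuous D}.
  apply: derivable_within_continuous => z; rewrite in_itv/= => /andP[z0 _].
  by have [] := dD z (lt_le_trans p0 z0).
have dD' : forall x : R, x \in `]s0, s1[%R -> is_derive x (1:R) D ((fun _ => 0) x).
  by move=> x; rewrite in_itv /= => /andP[x0 _]; apply: dD; apply: lt_trans x0.
have [c _] := MVT_segment le dD' cont.
by rewrite mul0r => /eqP; rewrite subr_eq0 => /eqP.
Unshelve. all: by end_near.
Qed.

Definition upd {m : nat} (t : 'rV[R]_m) (al be : 'I_m) (a b : R) : 'rV[R]_m :=
  t + (a - t 0 al) *: evec R al + (b - t 0 be) *: evec R be.

Lemma evecE {m : nat} (al j : 'I_m) : evec R al 0 j = (j == al)%:R.
Proof. by rewrite /evec mxE eqxx. Qed.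

Lemma updE {m : nat} (t : 'rV[R]_m) (al be : 'I_m) (a b : R) j : al != be ->
  upd t al be a b 0 j = if j == al then a else if j == be then b else t 0 j.
Proof.
move=> ab; rewrite /upd !mxE /=.
case: (eqVneq j al) => [->|ja]; first by rewrite (negbTE ab) mulr1 mulr0 addr0 addrC subrK.
case: (eqVneq j be) => [->|jb]; first by rewrite mulr0 addr0 mulr1 addrC subrK.
by rewrite !mulr0 !addr0.
Qed.

Lemma upd_pos {m : nat} (t : 'rV[R]_m) (al be : 'I_m) (a b : R) : al != be ->
  posvec t -> 0 < a -> 0 < b -> posvec (upd t al be a b).
Proof.
move=> ab tp a0 b0 j; rewrite updE //.
by case: ifP => // _; case: ifP.
Qed.

Lemma upd_self {m : nat} (t : 'rV[R]_m) (al be : 'I_m) : upd t al be (t 0 al) (t 0 be) = t.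
Proof. by rewrite /upd !subrr !scale0r !addr0. Qed.

Lemma upd_shift1 {m : nat} (t : 'rV[R]_m) (al be : 'I_m) (a b h : R) :
  upd t al be (h *: 1 + a) b = h *: evec R al + upd t al be a b.
Proof.
rewrite /upd -[h *: 1]/(h * 1) mulr1.
by apply/matrixP => i j; rewrite !mxE; ring.
Qed.

Lemma upd_shift2 {m : nat} (t : 'rV[R]_m) (al be : 'I_m) (a b h : R) :
  upd t al be a (h *: 1 + b) = h *: evec R be + upd t al be a b.
Proof.
rewrite /upd -[h *: 1]/(h * 1) mulr1.
by apply/matrixP => i j; rewrite !mxE; ring.
Qed.

Lemma cfunM {m : nat} (t : 'rV[R]_m) (al : 'I_m) :
  t 0 al * cfun al t = \prod_(i < m) t 0 i.
Proof. by rewrite (bigD1 al) //=. Qed.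


Lemma dtrans1 {m d : nat} (f : 'rV[R]_m -> 'rV[R]_d -> R) t (al be : 'I_m) (a b : R) x :
  derivable (fun s => f s x) (upd t al be a b) (evec R al) ->
  is_derive a (1:R) (fun a' => f (upd t al be a' b) x) (dt f al (upd t al be a b) x).
Proof.
move=> Hd.
have E : (fun h : R => h^-1 *: (((fun a' => f (upd t al be a' b) x) \o shift a) (h *: 1)
      - f (upd t al be a b) x)) =
    (fun h => h^-1 *: (((fun s => f s x) \o shift (upd t al be a b)) (h *: evec R al)
      - f (upd t al be a b) x)).
  by apply: funext => h; rewrite /= upd_shift1.
split; first by rewrite /derivable E.
by rewrite /dt /derive E.
Qed.

Lemma dtrans2 {m d : nat} (f : 'rV[R]_m -> 'rV[R]_d -> R) t (al be : 'I_m) (a b : R) x :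
  derivable (fun s => f s x) (upd t al be a b) (evec R be) ->
  is_derive b (1:R) (fun b' => f (upd t al be a b') x) (dt f be (upd t al be a b) x).
Proof.
move=> Hd.
have E : (fun h : R => h^-1 *: (((fun b' => f (upd t al be a b') x) \o shift b) (h *: 1)
      - f (upd t al be a b) x)) =
    (fun h => h^-1 *: (((fun s => f s x) \o shift (upd t al be a b)) (h *: evec R be)
      - f (upd t al be a b) x)).
  by apply: funext => h; rewrite /= upd_shift2.
split; first by rewrite /derivable E.
by rewrite /dt /derive E.
Qed.

Lemma cont_eps {m d : nat} (G : 'rV[R]_m * 'rV[R]_d -> R) (t : 'rV[R]_m) (x : 'rV[R]_d)
    (al be : 'I_m) (a b : R) :
  al != be -> posvec t -> 0 < a -> 0 < b ->
  {within @dom R m d, continuous G} ->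
  forall e : R, 0 < e -> exists2 dl : R, 0 < dl &
    forall a' b', `|a' - a| < dl -> `|b' - b| < dl ->
      `|G (upd t al be a' b', x) - G (upd t al be a b, x)| < e.
Proof.
move=> ab tp a0 b0 HC e e0.
pose p := (upd t al be a b, x).
have pd : dom p by exact: upd_pos.
have C0 : G @ within (@dom R m d) (nbhs p) --> G p.
  have := HC p; rewrite /continuous_at; case: (nbhs_subspaceP (@dom R m d) p) => //=.
have /cvgrPdist_lt /(_ e e0) N := C0.
have [r r0 Br] := (nbhs_ballP _ _).1 N.
pose K := 1 + `|evec R al| + `|evec R be|.
have K0 : 0 < K by rewrite /K ltr_wpDr // ltr_wpDr.
exists (Num.min (Num.min a b) (r / (2 * K))).
  by rewrite !lt_min a0 b0 /= divr_gt0 // mulr_gt0.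
move=> a' b'; rewrite !lt_min => /andP[/andP[ha _] har] /andP[/andP[_ hb] hbr].
have a'0 : 0 < a' by have := ler_norm (a - a'); rewrite distrC => ?; lra.
have b'0 : 0 < b' by have := ler_norm (b - b'); rewrite distrC => ?; lra.
rewrite distrC; apply: (Br (upd t al be a' b', x)); last exact: upd_pos.
split; last exact: ballxx.
rewrite -ball_normE /=.
have -> : upd t al be a b - upd t al be a' b' = (a - a') *: evec R al + (b - b') *: evec R be.
  by apply/matrixP => i j; rewrite /upd !mxE; ring.
apply: (le_lt_trans (ler_normD _ _)); rewrite !normrZ.
move: har hbr; rewrite (distrC a) (distrC b).
have qK : r / (2 * K) * (2 * K) = r by rewrite mulfVK // mulf_neq0 // gt_eqF.
move: qK (divr_gt0 r0 (mulr_gt0 (ltr0Sn R 1) K0)).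
rewrite /K; set q := r / _.
have := normr_ge0 (a - a'); have := normr_ge0 (b - b').
have := normr_ge0 (evec R al); have := normr_ge0 (evec R be).
move: `|a - a'| `|b - b'| `|evec R al| `|evec R be| => x1 x2 n1 n2 *.
nra.
Qed.

Lemma step {m d : nat} (f : 'rV[R]_m -> 'rV[R]_d -> R)
  (dt_ex : forall (al : 'I_m) (t : 'rV[R]_m) (x : 'rV[R]_d),
      posvec t -> derivable (fun s => f s x) t (evec R al))
  (dt_cont : forall al : 'I_m,
      {within @dom R m d, continuous (fun p => dt f al p.1 p.2)})
  (pde : forall (al : 'I_m) (t : 'rV[R]_m) (x : 'rV[R]_d),
      posvec t -> dt f al t x - 2^-1 * cfun (R:=R) al t * laplacian f t x = 0)
  (t : 'rV[R]_m) (x : 'rV[R]_d) (al be : 'I_m) :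
  al != be -> posvec t -> f t x = f (upd t al be (t 0 al * t 0 be) 1) x.
Proof.
move=> ab tp.
have := @key (fun a b => f (upd t al be a b) x) (fun a b => dt f al (upd t al be a b) x)
  (fun a b => dt f be (upd t al be a b) x).
move=> /(_ _ _ _ _ (t 0 al * t 0 be) (t 0 al) (t 0 al * t 0 be)).
rewrite mulrC mulfK ?gt_eqF // divff ?gt_eqF ?mulr_gt0 // upd_self mulrC; apply => //.
- by move=> a b a0 b0; apply: dtrans1; apply: dt_ex; exact: upd_pos.
- by move=> a b a0 b0; apply: dtrans2; apply: dt_ex; exact: upd_pos.
- move=> a b a0 b0; have up : posvec (upd t al be a b) by exact: upd_pos.
  have K2 : forall al', upd t al be a b 0 al' * dt f al' (upd t al be a b) x =
      2^-1 * (\prod_(i < m) upd t al be a b 0 i) * laplacian f (upd t al be a b) x.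
    move=> al'; have /eqP := pde al' _ x up; rewrite subr_eq0 => /eqP ->.
    by rewrite -(cfunM _ al'); ring.
  have ea : upd t al be a b 0 al = a by rewrite updE // eqxx.
  have eb : upd t al be a b 0 be = b by rewrite updE // eqxx eq_sym (negbTE ab).
  by rewrite -[X in X * _ = _]ea -[X in _ = X * _]eb !K2.
- by move=> a b a0 b0; exact: (@cont_eps m d (fun p => dt f al p.1 p.2) t x al be a b ab tp a0 b0 (dt_cont al)).
Qed.
End Aux.

Lemma prod_upd {R : realType} {m : nat} (t : 'rV[R]_m) (al be : 'I_m) : al != be ->
  \prod_(i < m) upd t al be (t 0 al * t 0 be) 1 0 i = \prod_(i < m) t 0 i.
Proof.
move=> ab.
have ba : be != al by rewrite eq_sym.
rewrite (bigD1 al) // (bigD1 be) //= [in RHS](bigD1 al) // [in RHS](bigD1 be) //=.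
rewrite updE // eqxx updE // (negbTE ba) eqxx mul1r mulrA; congr (_ * _).
apply: eq_bigr => i /andP[ia ib]; rewrite updE // (negbTE ia) (negbTE ib) //.
Qed.

Theorem mainTheorem1 (R : realType) (m d : nat)
  (f : 'rV[R]_m -> 'rV[R]_d -> R)
  (hm : (1 <= m)%N) (hd : (1 <= d)%N)
  (f0 : forall t : 'rV[R]_m, posvec t -> f t 0 = 0)
  (dt_ex : forall (al : 'I_m) (t : 'rV[R]_m) (x : 'rV[R]_d),
      posvec t -> derivable (fun s => f s x) t (evec R al))
  (dt_cont : forall al : 'I_m,
      {within @dom R m d, continuous (fun p => dt f al p.1 p.2)})
  (dx_ex : forall (a : 'I_d) (t : 'rV[R]_m) (x : 'rV[R]_d),
      posvec t -> derivable (fun y => f t y) x (evec R a))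
  (dxx_ex : forall (a b : 'I_d) (t : 'rV[R]_m) (x : 'rV[R]_d),
      posvec t -> derivable (fun y => dx f a t y) x (evec R b))
  (dxx_cont : forall a b : 'I_d,
      {within @dom R m d, continuous (fun p => dx (dx f a) b p.1 p.2)})
  (pde : forall (al : 'I_m) (t : 'rV[R]_m) (x : 'rV[R]_d),
      posvec t -> dt f al t x - 2^-1 * cfun (R:=R) al t * laplacian f t x = 0) :
  exists phi : R -> 'rV[R]_d -> R,
    forall (t : 'rV[R]_m) (x : 'rV[R]_d),
      posvec t -> f t x = phi (\prod_(al < m) t 0 al) x.
Proof.
pose i0 : 'I_m := Ordinal hm.
pose T (v : R) : 'rV[R]_m := \row_i (if i == i0 then v else 1).
exists (fun v x => f (T v) x) => t x tp.
pose N (u : 'rV[R]_m) := #|[set i | (i != i0) && (u 0 i != 1)]%SET|.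
suff H : forall n u, posvec u -> (N u <= n)%N -> f u x = f (T (\prod_(al < m) u 0 al)) x.
  exact: (H (N t)).
elim=> [|n IH] u up.
  rewrite leqn0 => /eqP N0; have S := cards0_eq (N0 : #|[set i | (i != i0) && (u 0 i != 1)]%SET| = 0%N).
  have o : forall i, i != i0 -> u 0 i = 1.
    move=> i ii; apply/eqP; apply/negPn/negP => ui.
    have : i \in [set i | (i != i0) && (u 0 i != 1)]%SET by rewrite inE ii ui.
    by rewrite S inE.
  have -> : \prod_(al < m) u 0 al = u 0 i0.
    by rewrite (bigD1 i0) //= big1 ?mulr1 // => i /o.
  congr (f _ x); apply/matrixP => i j; rewrite !mxE (ord1 i).
  by case: (eqVneq j i0) => [->|/o].
move=> Nu.
have [/eqP N0|] := boolP (N u == 0%N).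
  by apply: IH => //; rewrite N0.
rewrite -lt0n => /card_gt0P [be]; rewrite inE => /andP[bi b1].
have ib : i0 != be by rewrite eq_sym.
rewrite (@step R m d f dt_ex dt_cont pde u x i0 be ib up) -(prod_upd u i0 be ib).
apply: IH; first by apply: upd_pos => //; rewrite ?mulr_gt0.
rewrite -ltnS (leq_trans _ Nu) // /N [X in (_ < X)%N](cardsD1 be) inE bi b1 add1n ltnS.
apply: subset_leq_card; apply/fintype.subsetP => i; rewrite !inE => /andP[ii].
rewrite updE // (negbTE ii).
case: (eqVneq i be) => [->|ib']; first by rewrite eqxx.
by move=> ->.
Qed.
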